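(* Let $(R,\mathfrak{m})$ be a one-dimensional local Noetherian ring and let $n$ be a positive integer. If every $\mathfrak{m}$-primary ideal of $R$ has an $n$-generated reduction, then every ideal of $R$ has an $n$-generated reduction.
   Context: A reduction of an ideal $I$ is an ideal $J\subseteq I$ such that $I^{m+1}=JI^m$ for some $m>0$; it is $n$-generated if it can be generated by $n$ elements. *)

(* Defs.v *)
From HB Require Import structures.
From mathcomp Require Import all_boot all_algebra.
Set Implicit Arguments. Unset Strict Implicit. Unset Printing Implicit Defensive.
Import GRing.Theory.
Local Open Scope ring_scope.

Section Ideals.
Variable R : comNzRingType.

Definition subR (I J : R -> Prop) : Prop := forall x, I x -> J x.
Definition eqR (I J : R -> Prop) : Prop := forall x, I x <-> J x.

Definition is_ideal (I : R -> Prop) : Prop :=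
  [/\ I 0, (forall x y, I x -> I y -> I (x + y)) & (forall r x, I x -> I (r * x))].

Definition gen (S : R -> Prop) : R -> Prop :=
  fun x => forall J, is_ideal J -> subR S J -> J x.

Definition idmul (I J : R -> Prop) : R -> Prop :=
  gen (fun z => exists x y, [/\ I x, J y & z = x * y]).

Fixpoint idpow (I : R -> Prop) (k : nat) : R -> Prop :=
  match k with
  | 0%N => fun _ => True
  | k'.+1 => idmul I (idpow I k')
  end.

Definition n_generated (n : nat) (J : R -> Prop) : Prop :=
  exists f : 'I_n -> R, eqR J (gen (fun z => exists i, z = f i)).

Definition finitely_generated (J : R -> Prop) : Prop :=
  exists n, n_generated n J.

Definition reduction (J I : R -> Prop) : Prop :=
  [/\ is_ideal J, subR J I &
      exists m : nat, (0 < m)%N /\ eqR (idpow I m.+1) (idmul J (idpow I m))].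

Definition has_n_generated_reduction (n : nat) (I : R -> Prop) : Prop :=
  exists J, reduction J I /\ n_generated n J.

Definition is_prime_ideal (P : R -> Prop) : Prop :=
  [/\ is_ideal P, ~ P 1 & forall x y, P (x * y) -> P x \/ P y].

Definition is_maximal_ideal (M : R -> Prop) : Prop :=
  [/\ is_ideal M, ~ M 1 &
      forall J, is_ideal J -> subR M J -> ~ J 1 -> subR J M].

Definition local_with (m : R -> Prop) : Prop :=
  is_maximal_ideal m /\ forall M, is_maximal_ideal M -> eqR M m.

Definition noetherian : Prop :=
  forall I, is_ideal I -> finitely_generated I.

Definition strict_subR (I J : R -> Prop) : Prop := subR I J /\ ~ subR J I.

Definition krull_dim_one : Prop :=
  (exists P0 P1, [/\ is_prime_ideal P0, is_prime_ideal P1 & strict_subR P0 P1]) /\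
  ~ (exists P0 P1 P2, [/\ is_prime_ideal P0, is_prime_ideal P1, is_prime_ideal P2,
                         strict_subR P0 P1 & strict_subR P1 P2]).

Definition is_primary_ideal (Q : R -> Prop) : Prop :=
  [/\ is_ideal Q, ~ Q 1 &
      forall x y, Q (x * y) -> Q x \/ exists k : nat, Q (y ^+ k)].

Definition radical (I : R -> Prop) : R -> Prop := fun x => exists k : nat, I (x ^+ k).

Definition primary_to (m Q : R -> Prop) : Prop :=
  is_primary_ideal Q /\ eqR (radical Q) m.

End Ideals.

(* Main.v *)
Require Import Defs.
From mathcomp Require Import all_boot all_algebra.
From mathcomp Require Import ring.
From Stdlib Require Import Classical ClassicalEpsilon.
Set Implicit Arguments. Unset Strict Implicit. Unset Printing Implicit Defensive.
Import GRing.Theory.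
Local Open Scope ring_scope.


Lemma ideal0 (R : comNzRingType) (I : R -> Prop) : is_ideal I -> I 0.
Proof. by case. Qed.
Lemma idealD (R : comNzRingType) (I : R -> Prop) x y : is_ideal I -> I x -> I y -> I (x + y).
Proof. by case=> _ H _; apply: H. Qed.
Lemma idealM (R : comNzRingType) (I : R -> Prop) r x : is_ideal I -> I x -> I (r * x).
Proof. by case=> _ _ H; apply: H. Qed.
Lemma idealMr (R : comNzRingType) (I : R -> Prop) r x : is_ideal I -> I x -> I (x * r).
Proof. by move=> hI hx; rewrite mulrC; apply: idealM. Qed.
Lemma idealN (R : comNzRingType) (I : R -> Prop) x : is_ideal I -> I x -> I (- x).
Proof. by move=> hI hx; rewrite -mulN1r; apply: idealM. Qed.
Lemma idealB (R : comNzRingType) (I : R -> Prop) x y : is_ideal I -> I x -> I y -> I (x - y).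
Proof. by move=> hI hx hy; apply: idealD => //; apply: idealN. Qed.

Lemma gen_ideal (R : comNzRingType) (S : R -> Prop) : is_ideal (gen S).
Proof.
split.
- by move=> J hJ _; apply: ideal0.
- by move=> x y hx hy J hJ hS; apply: idealD => //; [apply: hx | apply: hy].
- by move=> r x hx J hJ hS; apply: idealM => //; apply: hx.
Qed.
Lemma gen_sub (R : comNzRingType) (S : R -> Prop) : subR S (gen S).
Proof. by move=> x hx J hJ hS; apply: hS. Qed.
Lemma gen_min (R : comNzRingType) (S J : R -> Prop) : is_ideal J -> subR S J -> subR (gen S) J.
Proof. by move=> hJ hS x hx; apply: hx. Qed.

Lemma idmul_ideal (R : comNzRingType) (I J : R -> Prop) : is_ideal (idmul I J).
Proof. exact: gen_ideal. Qed.
Lemma idmul_prod (R : comNzRingType) (I J : R -> Prop) x y : I x -> J y -> idmul I J (x * y).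
Proof. by move=> hx hy; apply: gen_sub; exists x, y. Qed.
Lemma idmul_min (R : comNzRingType) (I J K : R -> Prop) : is_ideal K ->
  (forall x y, I x -> J y -> K (x * y)) -> subR (idmul I J) K.
Proof. by move=> hK H; apply: gen_min => // z [x [y [hx hy ->]]]; apply: H. Qed.
Lemma idmul_mono (R : comNzRingType) (I I' J J' : R -> Prop) : subR I I' -> subR J J' ->
  subR (idmul I J) (idmul I' J').
Proof.
move=> h1 h2; apply: idmul_min; first exact: idmul_ideal.
by move=> x y hx hy; apply: idmul_prod; [apply: h1 | apply: h2].
Qed.
Lemma idmul_subl (R : comNzRingType) (I J : R -> Prop) : is_ideal I -> subR (idmul I J) I.
Proof. by move=> hI; apply: idmul_min => // x y hx _; apply: idealMr. Qed.
Lemma idmul_subr (R : comNzRingType) (I J : R -> Prop) : is_ideal J -> subR (idmul I J) J.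
Proof. by move=> hJ; apply: idmul_min => // x y _ hy; apply: idealM. Qed.

Lemma idpow_ideal (R : comNzRingType) (I : R -> Prop) k : is_ideal (idpow I k).
Proof. case: k => [|k] /=; last exact: idmul_ideal. by split. Qed.
Lemma idpow_mono (R : comNzRingType) (I J : R -> Prop) k : subR I J -> subR (idpow I k) (idpow J k).
Proof. move=> h; elim: k => [|k IH] //=; exact: idmul_mono. Qed.
Lemma idpow_anti (R : comNzRingType) (I : R -> Prop) a b : is_ideal I -> (b <= a)%N ->
  subR (idpow I a) (idpow I b).
Proof.
move=> hI; elim: a b => [|a IH] [|b] hb x //=.
by apply: idmul_mono x => //; apply: IH.
Qed.

Definition idadd (R : comNzRingType) (A B : R -> Prop) : R -> Prop :=
  fun x => exists a b, [/\ A a, B b & x = a + b].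
Definition pr (R : comNzRingType) (z : R) : R -> Prop := fun w => exists c, w = c * z.

Lemma idadd_ideal (R : comNzRingType) (A B : R -> Prop) : is_ideal A -> is_ideal B -> is_ideal (idadd A B).
Proof.
move=> hA hB; split.
- by exists 0, 0; rewrite addr0; split => //; apply: ideal0.
- move=> x y [a [b [ha hb ->]]] [a' [b' [ha' hb' ->]]].
  exists (a + a'), (b + b'); split; [exact: idealD | exact: idealD | ring].
- move=> r x [a [b [ha hb ->]]]; exists (r * a), (r * b); split;
    [exact: idealM | exact: idealM | ring].
Qed.
Lemma idadd_l (R : comNzRingType) (A B : R -> Prop) : is_ideal B -> subR A (idadd A B).
Proof. by move=> hB x hx; exists x, 0; rewrite addr0; split => //; apply: ideal0. Qed.
Lemma idadd_r (R : comNzRingType) (A B : R -> Prop) : is_ideal A -> subR B (idadd A B).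
Proof. by move=> hA x hx; exists 0, x; rewrite add0r; split => //; apply: ideal0. Qed.
Lemma pr_ideal (R : comNzRingType) (z : R) : is_ideal (pr z).
Proof.
split; first by exists 0; rewrite mul0r.
- by move=> x y [c ->] [d ->]; exists (c + d); ring.
- by move=> r x [c ->]; exists (r * c); ring.
Qed.
Lemma pr_el (R : comNzRingType) (z : R) : pr z z.
Proof. by exists 1; rewrite mul1r. Qed.

Lemma noeth_max (R : comNzRingType) (F : (R -> Prop) -> Prop) (I0 : R -> Prop) :
  noetherian R -> is_ideal I0 -> F I0 ->
  exists M, [/\ is_ideal M, F M & forall J, is_ideal J -> F J -> subR M J -> subR J M].
Proof.
move=> hN hI0 hF0; apply: NNPP => H.
have step : forall M, is_ideal M /\ F M ->
    {J | (is_ideal J /\ F J) /\ (subR M J /\ ~ subR J M)}.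
  move=> M [hM hF]; apply: constructive_indefinite_description.
  apply: NNPP => H2; apply: H; exists M; split => // J hJ hFJ hMJ.
  by apply: NNPP => hn; apply: H2; exists J.
pose G := {M : R -> Prop | is_ideal M /\ F M}.
pose next (g : G) : G := exist _ (sval (step _ (svalP g))) (proj1 (svalP (step _ (svalP g)))).
have nextP g : subR (sval g) (sval (next g)) /\ ~ subR (sval (next g)) (sval g).
  exact: (proj2 (svalP (step _ (svalP g)))).
pose g0 : G := exist _ I0 (conj hI0 hF0).
pose sq k := sval (iter k next g0).
have sqS k : subR (sq k) (sq k.+1) by rewrite /sq iterS; case: (nextP (iter k next g0)).
have sqI k : is_ideal (sq k) by rewrite /sq; case: (svalP (iter k next g0)).
have mono a b : (a <= b)%N -> subR (sq a) (sq b).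
  move=> /subnK <-; elim: (b - a)%N => [|d IH] x hx //=.
  by rewrite addSn; apply: sqS; apply: IH.
pose U x := exists k, sq k x.
have hU : is_ideal U.
  split; first by exists 0%N; apply: ideal0.
  - move=> x y [a ha] [b hb]; exists (maxn a b); apply: idealD => //.
    + by apply: mono ha; rewrite leq_maxl.
    + by apply: mono hb; rewrite leq_maxr.
  - by move=> r x [a ha]; exists a; apply: idealM.
have [n [f hf]] := hN U hU.
have kf : forall i, {k | sq k (f i)}.
  move=> i; apply: constructive_indefinite_description.
  by apply/hf; apply: gen_sub; exists i.
pose K := (\max_(i < n) sval (kf i))%N.
have hK : subR U (sq K).
  move=> x /hf; apply: gen_min => // z [i ->].
  apply: (mono (sval (kf i))); last exact: (svalP (kf i)).
  by rewrite /K (bigD1 i) //= leq_maxl.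
case: (nextP (iter K next g0)) => _; apply.
by move=> x hx; apply: hK; exists K.+1; rewrite /sq iterS.
Qed.

Lemma addpr_mul (R : comNzRingType) (M : R -> Prop) a b u v :
  is_ideal M -> M (a * b) -> idadd M (pr a) u -> idadd M (pr b) v -> M (u * v).
Proof.
move=> hM hab [p [q [hp [c ->] ->]]] [p' [q' [hp' [d ->] ->]]].
have -> : (p + c * a) * (p' + d * b) = p * p' + d * b * p + c * a * p' + (c * d) * (a * b) by ring.
by repeat apply: idealD => //; apply: idealM.
Qed.

Lemma maximal_prime (R : comNzRingType) (m : R -> Prop) :
  is_maximal_ideal m -> forall a b, m (a * b) -> m a \/ m b.
Proof.
case=> hm hm1 hmax a b hab; case: (classic (m a)) => ha; [by left | right].
have hJ := idadd_ideal hm (pr_ideal a).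
have J1 : idadd m (pr a) 1.
  apply: NNPP => hn; apply: ha; apply: (hmax _ hJ (idadd_l (pr_ideal a)) hn).
  exact: (idadd_r hm (pr_el a)).
case: J1 => t [q [ht [c ->] e]].
have -> : b = b * 1 by rewrite mulr1.
rewrite e; have -> : b * (t + c * a) = b * t + c * (a * b) by ring.
by apply: idealD => //; apply: idealM.
Qed.

Lemma proper_sub_max (R : comNzRingType) (m I : R -> Prop) :
  noetherian R -> local_with m -> is_ideal I -> ~ I 1 -> subR I m.
Proof.
move=> hN [_ hloc] hI hI1.
have [M [hM [hIM hM1] hmax]] := noeth_max (F := fun K => subR I K /\ ~ K 1) hN hI (conj (fun x h => h) hI1).
have hMm : is_maximal_ideal M.
  split=> // J hJ hMJ hJ1; apply: hmax => //; split => // x /hIM; exact: hMJ.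
by move=> x /hIM /(hloc _ hMm x).
Qed.

Lemma unit_out (R : comNzRingType) (m : R -> Prop) y :
  noetherian R -> local_with m -> ~ m y -> exists c, c * y = 1.
Proof.
move=> hN hl hy; case: (classic (pr y 1)) => [[c e]|hn]; first by exists c.
by case: hy; apply: (proper_sub_max hN hl (pr_ideal y) hn); apply: pr_el.
Qed.

Lemma primary_of (R : comNzRingType) (m I : R -> Prop) :
  noetherian R -> local_with m -> is_ideal I -> ~ I 1 ->
  (forall x, m x -> exists k, I (x ^+ k)) -> primary_to m I.
Proof.
move=> hN hl hI hI1 hrad; have hIm := proper_sub_max hN hl hI hI1.
have [[hm hm1 _] _] := hl.
split; first split => //.
- move=> x y hxy; case: (classic (m y)) => hy.
    by right; apply: hrad.
  left; have [c hc] := unit_out hN hl hy.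
  have -> : x = c * (x * y) by rewrite mulrCA hc mulr1.
  exact: idealM.
- move=> x; split; last exact: hrad.
  case=> k /hIm; elim: k => [|k IH] /=.
    by rewrite expr0 => /hm1.
  by rewrite exprS => /(maximal_prime (proj1 hl)) [] // h; apply: IH.
Qed.

Lemma prime_avoid (R : comNzRingType) (I : R -> Prop) (x : R) :
  noetherian R -> is_ideal I -> (forall k, ~ I (x ^+ k)) ->
  exists P, [/\ is_prime_ideal P, subR I P & ~ P x].
Proof.
move=> hN hI hx.
have [M [hM [hIM hMx] hmax]] :=
  noeth_max (F := fun K => subR I K /\ forall k, ~ K (x ^+ k)) hN hI (conj (fun y h => h) hx).
have notF : forall a, ~ M a -> exists k, idadd M (pr a) (x ^+ k).
  move=> a ha; apply: NNPP => hn; apply: ha.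
  have hMJ : subR M (idadd M (pr a)) by move=> y hy; exact: (idadd_l (pr_ideal a) hy).
  apply: (hmax _ (idadd_ideal hM (pr_ideal a)) _ hMJ); last exact: (idadd_r hM (pr_el a)).
  split; first by move=> y /hIM /hMJ.
  by move=> k hk; apply: hn; exists k.
exists M; split => //.
- split => //; first by move: (hMx 0%N); rewrite expr0.
  move=> a b hab; apply: NNPP => /not_or_and [ha hb].
  have [i hi] := notF _ ha; have [j hj] := notF _ hb.
  by apply: (hMx (i + j)%N); rewrite exprD; apply: addpr_mul hi hj.
- by move=> hx1; apply: (hMx 1%N); rewrite expr1.
Qed.

Lemma minimal_elt (R : comNzRingType) (P : R -> Prop) (x : R) :
  noetherian R -> is_prime_ideal P ->
  (forall P', is_prime_ideal P' -> ~ strict_subR P' P) -> P x ->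
  exists s k, ~ P s /\ s * x ^+ k = 0.
Proof.
move=> hN [hP hP1 hPp] hmin hx; apply: NNPP => H.
have H' : forall s k, ~ P s -> s * x ^+ k <> 0.
  by move=> s k hs e; apply: H; exists s, k.
have hZ : is_ideal (fun w : R => w = 0).
  split => //; [by move=> a b -> ->; rewrite addr0 | by move=> r a ->; rewrite mulr0].
have [M [hM hMF hmax]] :=
  noeth_max (F := fun K => forall s k, ~ P s -> ~ K (s * x ^+ k)) hN hZ H'.
have notF : forall a, ~ M a -> exists s k, ~ P s /\ idadd M (pr a) (s * x ^+ k).
  move=> a ha; apply: NNPP => hn; apply: ha.
  have hMJ : subR M (idadd M (pr a)) by move=> y hy; exact: (idadd_l (pr_ideal a) hy).
  apply: (hmax _ (idadd_ideal hM (pr_ideal a)) _ hMJ); last exact: (idadd_r hM (pr_el a)).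
  by move=> s k hs hk; apply: hn; exists s, k.
apply: (hmin M).
- split => //; first by move: (hMF 1 0%N hP1); rewrite expr0 mulr1.
  move=> a b hab; apply: NNPP => /not_or_and [ha hb].
  have [s1 [i [hs1 hi]]] := notF _ ha; have [s2 [j [hs2 hj]]] := notF _ hb.
  apply: (hMF (s1 * s2) (i + j)%N).
    by case/hPp.
  have -> : s1 * s2 * x ^+ (i + j) = (s1 * x ^+ i) * (s2 * x ^+ j) by rewrite exprD; ring.
  exact: addpr_mul hi hj.
- split.
    by move=> y hy; apply: NNPP => hn; apply: (hMF y 0%N hn); rewrite expr0 mulr1.
  by move=> /(_ x hx) h; apply: (hMF 1 1%N hP1); rewrite expr1 mul1r.
Qed.

Lemma sumpow (R : comNzRingType) (A B : R -> Prop) : is_ideal A -> is_ideal B ->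
  forall n a b, (a + b)%N = n ->
  subR (idpow (idadd A B) n) (idadd (idpow A a) (idpow B b)).
Proof.
move=> hA hB n; elim: n => [|n IH] a b hab.
  have [-> ->] : a = 0%N /\ b = 0%N by case: a b hab => [|a] [|b].
  by move=> x _; exists x, 0; rewrite addr0; split.
case: a hab => [|a'] hab.
  by move=> x _; exists x, 0; rewrite addr0; split => //; apply: ideal0 (idpow_ideal B b).
case: b hab => [|b'] hab.
  by move=> x _; exists 0, x; rewrite add0r; split => //; apply: ideal0 (idpow_ideal A _).
have e1 : (a' + b'.+1)%N = n by move: hab; rewrite addSn => -[].
have e2 : (a'.+1 + b')%N = n by rewrite addSn -addnS.
have h1 := IH a' b'.+1 e1; have h2 := IH a'.+1 b' e2.
have hT := idadd_ideal (idpow_ideal A a'.+1) (idpow_ideal B b'.+1).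
apply: idmul_min => // u x [al [be [hal hbe ->]]] hx.
rewrite mulrDl; apply: idealD => //.
- case: (h1 x hx) => p [q [hp hq ->]]; rewrite mulrDr.
  apply: idealD => //.
  + by apply: (idadd_l (idpow_ideal B b'.+1)); apply: idmul_prod.
  + by apply: (idadd_r (idpow_ideal A a'.+1)); exact: (idealM al (idpow_ideal B b'.+1) hq).
- case: (h2 x hx) => p [q [hp hq ->]]; rewrite mulrDr.
  apply: idealD => //.
  + by apply: (idadd_l (idpow_ideal B b'.+1)); exact: (idealM be (idpow_ideal A a'.+1) hp).
  + by apply: (idadd_r (idpow_ideal A a'.+1)); apply: idmul_prod.
Qed.

Lemma prpow (R : comNzRingType) (x : R) k : subR (idpow (pr x) k) (pr (x ^+ k)).
Proof.
elim: k => [|k IH] /=.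
  by move=> w _; exists w; rewrite expr0 mulr1.
apply: idmul_min; first exact: pr_ideal.
move=> u w [c ->] /IH [d ->]; exists (c * d); rewrite exprS; ring.
Qed.

Lemma killpow (R : comNzRingType) (P I : R -> Prop) :
  noetherian R -> is_prime_ideal P ->
  (forall P', is_prime_ideal P' -> ~ strict_subR P' P) ->
  is_ideal I -> subR I P ->
  exists s K, ~ P s /\ forall w, idpow I K w -> s * w = 0.
Proof.
move=> hN hP hmin hI hIP; have [_ hP1 hPp] := hP.
have hZ : is_ideal (fun w : R => w = 0).
  split => //; [by move=> a b -> ->; rewrite addr0 | by move=> r a ->; rewrite mulr0].
have hF0 : subR (fun w : R => w = 0) I /\
   exists s K, ~ P s /\ forall w, idpow (fun w : R => w = 0) K w -> s * w = 0.
  split; first by move=> w ->; apply: ideal0.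
  exists 1, 1%N; split => // w /=; rewrite mul1r.
  by move=> hw; apply: (idmul_min hZ _ hw) => a b -> _; rewrite mul0r.
have [X [hX [hXI [s1 [K1 [hs1 hK1]]]] hmax]] :=
  noeth_max (F := fun X => subR X I /\
     exists s K, ~ P s /\ forall w, idpow X K w -> s * w = 0) hN hZ hF0.
have hIX : subR I X.
  move=> x hx; apply: NNPP => hnx.
  have [s2 [k2 [hs2 hk2]]] := minimal_elt hN hP hmin (hIP _ hx).
  have hMJ : subR X (idadd X (pr x)) by move=> y hy; exact: (idadd_l (pr_ideal x) hy).
  apply: hnx; apply: (hmax _ (idadd_ideal hX (pr_ideal x)) _ hMJ); last first.
    exact: (idadd_r hX (pr_el x)).
  split.
    move=> y [p [q [hp [c ->] ->]]]; apply: idealD => //; first exact: hXI.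
    exact: idealM.
  exists (s1 * s2), (K1 + k2)%N; split; first by case/hPp.
  move=> w /(sumpow hX (pr_ideal x) (erefl _)) [p [q [hp /prpow [c ->] ->]]].
  have -> : s1 * s2 * (p + c * x ^+ k2) = s2 * (s1 * p) + c * s1 * (s2 * x ^+ k2) by ring.
  by rewrite hK1 // hk2 !mulr0 addr0.
exists s1, K1; split => // w hw; apply: hK1; exact: (idpow_mono (k:=K1) hIX hw).
Qed.

Lemma ann_stab (R : comNzRingType) (s : R) : noetherian R ->
  exists j, (0 < j)%N /\ forall c, c * s ^+ (j + j) = 0 -> c * s ^+ j = 0.
Proof.
move=> hN.
pose T k := fun c : R => c * s ^+ k = 0.
have hT k : is_ideal (T k).
  rewrite /T; split; first by rewrite mul0r.
  - by move=> x y hx hy; rewrite mulrDl hx hy addr0.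
  - by move=> r x hx; rewrite -mulrA hx mulr0.
have [M [hM [k [hk hMk]] hmax]] :=
  noeth_max (F := fun K => exists k, (0 < k)%N /\ eqR K (T k)) hN (hT 1%N)
     (ex_intro _ 1%N (conj (erefl true) (fun x => iff_refl _))).
exists k; split => // c hc.
apply/(hMk c); apply: (hmax _ (hT (k + k)%N)) => //.
  by exists (k + k)%N; split; [rewrite addn_gt0 hk | move=> x; split].
move=> y /hMk; rewrite /T => hy; by rewrite exprD mulrA hy mul0r.
Qed.

Lemma idmul_swap (R : comNzRingType) (A B C : R -> Prop) :
  subR (idmul A (idmul B C)) (idmul B (idmul A C)).
Proof.
apply: idmul_min; first exact: idmul_ideal.
move=> a w ha hw.
pose K' := fun w => idmul B (idmul A C) (a * w).
have hBAC := @idmul_ideal _ B (idmul A C).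
have hK' : is_ideal K'.
  rewrite /K'; split.
  - by rewrite mulr0; apply: ideal0 hBAC.
  - by move=> x y hx hy; rewrite mulrDr; exact: idealD hBAC hx hy.
  - by move=> r x hx; have := idealM r hBAC hx; rewrite mulrCA.
apply: (idmul_min hK' _ hw) => b c hb hc; rewrite /K' mulrCA.
by apply: idmul_prod => //; apply: idmul_prod.
Qed.

Lemma red_iter (R : comNzRingType) (Q J : R -> Prop) r :
  eqR (idpow Q r.+1) (idmul J (idpow Q r)) ->
  forall d, subR (idpow Q (r + d).+1) (idmul J (idpow Q (r + d))).
Proof.
move=> h d; elim: d => [|d IH]; first by rewrite addn0 => x /h.
rewrite addnS => x /= hx.
have hx' := idmul_mono (fun y (hy : Q y) => hy) IH hx.
exact: idmul_swap hx'.
Qed.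

Lemma mul_add (R : comNzRingType) (A C Z : R -> Prop) :
  is_ideal A -> is_ideal C -> is_ideal Z ->
  subR (idmul (idadd A Z) (idadd C Z)) (idadd (idmul A C) Z).
Proof.
move=> hA hC hZ; apply: idmul_min; first exact: idadd_ideal (idmul_ideal A C) hZ.
move=> x y [a [z1 [ha hz1 ->]]] [c [z2 [hc hz2 ->]]].
exists (a * c), (a * z2 + z1 * c + z1 * z2); split.
- exact: idmul_prod.
- have h1 : Z (a * z2) := idealM a hZ hz2.
  have h2 : Z (z1 * c) := idealMr c hZ hz1.
  have h3 : Z (z1 * z2) := idealMr z2 hZ hz1.
  exact: idealD hZ (idealD hZ h1 h2) h3.
- ring.
Qed.

Lemma powadd (R : comNzRingType) (I Z : R -> Prop) k : is_ideal I -> is_ideal Z ->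
  subR (idpow (idadd I Z) k) (idadd (idpow I k) Z).
Proof.
move=> hI hZ; elim: k => [|k IH] /=.
  by move=> x _; exists x, 0; rewrite addr0; split => //; apply: ideal0.
move=> x hx; have := idmul_mono (fun y (hy : idadd I Z y) => hy) IH hx.
move=> h; exact: (mul_add hI (idpow_ideal I k) hZ h).
Qed.

Lemma transfer (R : comNzRingType) n (I : R -> Prop) (z : R) e :
  is_ideal I -> (forall w, idpow I e w -> pr z w -> w = 0) ->
  has_n_generated_reduction n (idadd I (pr z)) -> has_n_generated_reduction n I.
Proof.
move=> hI hZ0 [J [[hJ hJQ [r [hr hred]]] [g hg]]].
have hZ := pr_ideal z.
have hQ : forall i, idadd I (pr z) (g i).
  by move=> i; apply: hJQ; apply/hg; apply: gen_sub; exists i.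
have ha : forall i, {p | I p /\ exists q, pr z q /\ g i = p + q}.
  move=> i; apply: constructive_indefinite_description.
  by case: (hQ i) => p [q [hp hq ->]]; exists p; split => //; exists q.
pose a i := sval (ha i).
pose J' := gen (fun w => exists i, w = a i).
have hJ'I : subR J' I.
  by apply: gen_min => // w [i ->]; case: (svalP (ha i)).
have hJJ' : subR J (idadd J' (pr z)).
  move=> x /hg; apply: gen_min; first exact: idadd_ideal (gen_ideal _) hZ.
  move=> w [i ->]; case: (svalP (ha i)) => _ [q [hq e']].
  by exists (a i), q; split => //; apply: gen_sub; exists i.
exists J'; split; last by exists a.
split; [exact: gen_ideal | exact: hJ'I |].
exists (r + e)%N; split; first by rewrite addn_gt0 hr.
move=> x; split; last first.
  move=> hx; exact: (idmul_mono hJ'I (fun y (hy : idpow I (r + e) y) => hy) hx).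
move=> hx.
have hQx : idpow (idadd I (pr z)) (r + e).+1 x := idpow_mono (idadd_l hZ) hx.
have h1 := red_iter hred (d:=e) hQx.
have h2 := idmul_mono hJJ' (powadd (k := (r + e)%N) hI hZ) h1.
have [u [w [hu hw ex]]] := mul_add (gen_ideal _) (idpow_ideal I (r + e)) hZ h2.
have huI : idpow I (r + e).+1 u := idmul_mono hJ'I (fun y (hy : idpow I (r + e) y) => hy) hu.
have hwI : idpow I (r + e).+1 w.
  have -> : w = x - u by rewrite ex; ring.
  exact: idealB (idpow_ideal I _) hx huI.
have hwe : idpow I e w.
  by apply: (idpow_anti hI _ hwI); apply: leqW; rewrite leq_addl.
by rewrite ex (hZ0 w hwe hw) addr0.
Qed.

Theorem proposition2p2 (R : comNzRingType) (m : R -> Prop) (n : nat) :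
  noetherian R -> local_with m -> krull_dim_one R -> (0 < n)%N ->
  (forall Q : R -> Prop, primary_to m Q -> has_n_generated_reduction n Q) ->
  forall I : R -> Prop, is_ideal I -> has_n_generated_reduction n I.
Proof.
move=> hN hl hdim hn hprim I hI.
apply: NNPP => hnot.
have [M [hM hMF hmax]] :=
  noeth_max (F := fun X => ~ has_n_generated_reduction n X) hN hI hnot.
apply: hMF.
case: (classic (M 1)) => hM1.
  exists M; split.
    by split => //; exists 1%N; split => // x; split.
  exists (fun _ => 1); move=> x; split.
    move=> hx; have h1 : gen (fun z : R => exists i : 'I_n, z = 1) 1.
      by apply: gen_sub; exists (Ordinal hn).
    by have := idealM x (@gen_ideal _ _) h1; rewrite mulr1.
  by apply: gen_min => // w [i ->].
case: (classic (forall x, m x -> exists k, M (x ^+ k))) => hrad.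
  by apply: hprim; exact: primary_of hN hl hM hM1 hrad.
have [x [hxm hxk]] : exists x, m x /\ forall k, ~ M (x ^+ k).
  apply: NNPP => H; apply: hrad => x hxm; apply: NNPP => hk; apply: H.
  by exists x; split => // k hk'; apply: hk; exists k.
have [P [hP hMP hPx]] := prime_avoid hN hM hxk.
have [hPi hP1 hPp] := hP.
have hPm : subR P m := proper_sub_max hN hl hPi hP1.
have hmprime : is_prime_ideal m.
  have [[hmi hm1 hmm] _] := hl.
  by split => //; apply: maximal_prime (proj1 hl).
have hmin : forall P', is_prime_ideal P' -> ~ strict_subR P' P.
  move=> P' hP' hs; apply: (proj2 hdim); exists P', P, m; split => //.
  by split => // h; apply: hPx; apply: h.
have [s [K [hs hK]]] := killpow hN hP hmin hM hMP.
have [j [hj hjs]] := ann_stab s hN.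
apply: (transfer (z := s ^+ j) (e := K) hM).
  move=> w hw [c ec].
  have sw : s * w = 0 := hK w hw.
  have : c * s ^+ (j + j) = 0.
    rewrite exprD mulrA -ec; case: j hj {hjs ec} => [|j'] // _.
    by rewrite exprS mulrA (mulrC w s) sw mul0r.
  by move/hjs; rewrite -ec.
apply: NNPP => hn'.
have hsub := hmax _ (idadd_ideal hM (pr_ideal (s ^+ j))) hn'
   (fun y (hy : M y) => idadd_l (pr_ideal (s ^+ j)) hy).
have hsj : M (s ^+ j) := hsub _ (idadd_r hM (pr_el _)).
have := hMP _ hsj; elim: (j) => [|k IH].
  by rewrite expr0.
by rewrite exprS => /hPp [].
Qed.
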